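(* There is a one-to-one correspondence between isomorphism classes of real metric 3-Leibniz algebras $V$ and isomorphism classes of pairs $(\mathfrak{g},V)$ where $\mathfrak{g}$ is a metric real Lie algebra and $V$ is a faithful real orthogonal representation of $\mathfrak{g}$.
   Context: All vector spaces are finite-dimensional and real. A real metric 3-Leibniz algebra is a real vector space $V$ with a nondegenerate symmetric bilinear form $\langle-,-\rangle$ and a trilinear map $[-,-,-]:V^3\to V$ satisfying, for all $x,y,z,s,t$: the fundamental identity $[x,y,[z,s,t]]=[[x,y,z],s,t]+[z,[x,y,s],t]+[z,s,[x,y,t]]$; unitarity $\langle[x,y,z],s\rangle+\langle z,[x,y,s]\rangle=0$; and symmetry $\langle[x,y,z],s\rangle=\langle[z,s,x],y\rangle$. An isomorphism of such algebras is a linear bijection $\varphi:V\to W$ with $[\varphi u,\varphi v,\varphi w]_W=\varphi[u,v,w]_V$ and $\langle\varphi u,\varphi v\rangle_W=\langle u,v\rangle_V$. A metric real Lie algebra is a real Lie algebra $\mathfrak{g}$ with a nondegenerate symmetric ad-invariant bilinear form $(-,-)$ (any signature). A real orthogonal representation is a Lie algebra homomorphism $\mathfrak{g}\to\mathfrak{so}(V)$ for $V$ with nondegenerate symmetric form $\langle-,-\rangle$; faithful means injective, so $\mathfrak{g}$ may be viewed as a subalgebra of $\mathfrak{so}(V)$. Pairs $(\mathfrak{g}_V,V)$ and $(\mathfrak{g}_W,W)$ are isomorphic if there is an isometry $\varphi:V\to W$ with $\mathfrak{g}_W=\varphi\circ\mathfrak{g}_V\circ\varphi^{-1}$ and such that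 $x\mapsto\varphi\circ x\circ\varphi^{-1}$ is an isometry of metric Lie algebras $\mathfrak{g}_V\to\mathfrak{g}_W$. *)

(* Defs.v *)
From HB Require Import structures.
From mathcomp Require Import all_boot all_order all_algebra.
From mathcomp Require Import reals.
Set Implicit Arguments. Unset Strict Implicit. Unset Printing Implicit Defensive.
Import Order.TTheory GRing.Theory Num.Theory.
Local Open Scope ring_scope.

Section Defs.
Variable R : realType.

(* Vectors of an n-dimensional real vector space are row vectors 'rV[R]_n;
   a symmetric bilinear form is given by a Gram matrix B: <u,v> = u B v^T. *)
Definition bform n (B : 'M[R]_n) (u v : 'rV[R]_n) : R := (u *m B *m v^T) 0 0.

Definition nondeg_sym_form n (B : 'M[R]_n) : Prop :=
  (forall u v, bform B u v = bform B v u) /\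
  (forall u, (forall v, bform B u v = 0) -> u = 0).

Definition linear_map n m (f : 'rV[R]_n -> 'rV[R]_m) : Prop :=
  forall (a : R) u v, f (a *: u + v) = a *: f u + f v.

Definition trilinear n (br : 'rV[R]_n -> 'rV[R]_n -> 'rV[R]_n -> 'rV[R]_n) : Prop :=
  (forall y z, linear_map (fun x => br x y z)) /\
  (forall x z, linear_map (fun y => br x y z)) /\
  (forall x y, linear_map (fun z => br x y z)).

Record leib3 := Leib3 {
  l3dim : nat;
  l3form : 'M[R]_l3dim;
  l3br : 'rV[R]_l3dim -> 'rV[R]_l3dim -> 'rV[R]_l3dim -> 'rV[R]_l3dim }.
Arguments l3br : clear implicits.

Definition is_metric3Leibniz (L : leib3) : Prop :=
  let br := l3br L in let f := bform (l3form L) in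
  nondeg_sym_form (l3form L) /\ trilinear br /\
  (forall x y z s t,
     br x y (br z s t) = br (br x y z) s t + br z (br x y s) t + br z s (br x y t)) /\
  (forall x y z s, f (br x y z) s + f z (br x y s) = 0) /\
  (forall x y z s, f (br x y z) s = f (br z s x) y).

Definition leib3_iso (L L' : leib3) : Prop :=
  exists phi : 'rV[R]_(l3dim L) -> 'rV[R]_(l3dim L'),
    linear_map phi /\ bijective phi /\
    (forall u v w, l3br L' (phi u) (phi v) (phi w) = phi (l3br L u v w)) /\
    (forall u v, bform (l3form L') (phi u) (phi v) = bform (l3form L) u v).

(* ---------- pairs (g, V): g a metric real Lie algebra, V a faithful real
   orthogonal representation; g is viewed as a Lie subalgebra of so(V),
   endomorphisms of V acting on row vectors by v |-> v *m X. ---------- *)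
Record lieRep := LieRep {
  lrdim : nat;
  lrform : 'M[R]_lrdim;
  lrg : 'M[R]_lrdim -> Prop;
  lrh : 'M[R]_lrdim -> 'M[R]_lrdim -> R  (* metric on g (only its values on g matter) *)
}.
Arguments lrg : clear implicits.
Arguments lrh : clear implicits.

Definition lie_br n (X Y : 'M[R]_n) : 'M[R]_n := X * Y - Y * X.

Definition is_metric_lie_rep (p : lieRep) : Prop :=
  let g := lrg p in let h := lrh p in let B := lrform p in
  nondeg_sym_form B /\
  g 0 /\ (forall (a : R) X Y, g X -> g Y -> g (a *: X + Y)) /\
  (forall X, g X -> forall u v, bform B (u *m X) v + bform B u (v *m X) = 0) /\
  (forall X Y, g X -> g Y -> g (lie_br X Y)) /\
  (forall (a : R) X Y Z, g X -> g Y -> g Z -> h (a *: X + Y) Z = a * h X Z + h Y Z) /\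
  (forall X Y, g X -> g Y -> h X Y = h Y X) /\
  (forall X, g X -> (forall Y, g Y -> h X Y = 0) -> X = 0) /\
  (forall X Y Z, g X -> g Y -> g Z -> h (lie_br X Y) Z + h Y (lie_br X Z) = 0).

Definition conj_by n m (phi : 'rV[R]_n -> 'rV[R]_m) (X : 'M[R]_n) (Y : 'M[R]_m) :=
  forall v, phi (v *m X) = (phi v) *m Y.

Definition lieRep_iso (p q : lieRep) : Prop :=
  exists phi : 'rV[R]_(lrdim p) -> 'rV[R]_(lrdim q),
    linear_map phi /\ bijective phi /\
    (forall u v, bform (lrform q) (phi u) (phi v) = bform (lrform p) u v) /\
    (forall X, lrg p X -> exists Y, lrg q Y /\ conj_by phi X Y) /\
    (forall Y, lrg q Y -> exists X, lrg p X /\ conj_by phi X Y) /\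
    (forall X1 X2 Y1 Y2, lrg p X1 -> lrg p X2 -> lrg q Y1 -> lrg q Y2 ->
       conj_by phi X1 Y1 -> conj_by phi X2 Y2 -> lrh q Y1 Y2 = lrh p X1 X2).

End Defs.
Arguments l3br {R}.
Arguments lrg {R}.
Arguments lrh {R}.

(* Main.v *)
Require Import Defs.
From HB Require Import structures.
From mathcomp Require Import all_boot all_order all_algebra.
From mathcomp Require Import reals.
From Stdlib Require Import ClassicalEpsilon Classical.
From mathcomp Require Import ring.
Set Implicit Arguments. Unset Strict Implicit. Unset Printing Implicit Defensive.
Import Order.TTheory GRing.Theory Num.Theory.
Local Open Scope ring_scope.

Section Helpers.
Variable R : realType.

Lemma lin0 n m (f : 'rV[R]_n -> 'rV[R]_m) : linear_map f -> f 0 = 0.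
Proof.
move=> hf; have h := hf 1 0 0; rewrite scaler0 addr0 scale1r in h.
by apply: (addrI (f 0)); rewrite addr0 -h.
Qed.

Lemma linD n m (f : 'rV[R]_n -> 'rV[R]_m) u v : linear_map f -> f (u + v) = f u + f v.
Proof. by move=> hf; have := hf 1 u v; rewrite !scale1r. Qed.

Lemma linZ n m (f : 'rV[R]_n -> 'rV[R]_m) a u : linear_map f -> f (a *: u) = a *: f u.
Proof. by move=> hf; have := hf a u 0; rewrite !addr0 (lin0 hf) addr0. Qed.

Lemma lin_sum n m (f : 'rV[R]_n -> 'rV[R]_m) I (s : seq I) (F : I -> 'rV[R]_n) :
  linear_map f -> f (\sum_(i <- s) F i) = \sum_(i <- s) f (F i).
Proof. by move=> hf; apply: (big_morph f (fun u v => linD u v hf) (lin0 hf)). Qed.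

Lemma bformDl n (B : 'M[R]_n) a u v w :
  bform B (a *: u + v) w = a * bform B u w + bform B v w.
Proof. by rewrite /bform !mulmxDl -!scalemxAl !mxE. Qed.

Lemma bformDr n (B : 'M[R]_n) a u v w :
  bform B u (a *: v + w) = a * bform B u v + bform B u w.
Proof. by rewrite /bform linearD linearZ /= mulmxDr -scalemxAr !mxE. Qed.

Lemma bform_suml n (B : 'M[R]_n) I (s : seq I) (F : I -> 'rV[R]_n) w :
  bform B (\sum_(i <- s) F i) w = \sum_(i <- s) bform B (F i) w.
Proof. by rewrite /bform !mulmx_suml summxE. Qed.

Lemma bform_sumr n (B : 'M[R]_n) I (s : seq I) (F : I -> 'rV[R]_n) w :
  bform B w (\sum_(i <- s) F i) = \sum_(i <- s) bform B w (F i).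
Proof. by rewrite /bform raddf_sum mulmx_sumr summxE. Qed.

Lemma bform0l n (B : 'M[R]_n) w : bform B 0 w = 0.
Proof. by rewrite /bform !mul0mx mxE. Qed.

Lemma bformNl n (B : 'M[R]_n) u w : bform B (- u) w = - bform B u w.
Proof. by have := bformDl B (-1) u 0 w; rewrite addr0 bform0l addr0 scaleN1r mulN1r. Qed.

Lemma bformBl n (B : 'M[R]_n) u v w : bform B (u - v) w = bform B u w - bform B v w.
Proof. by have := bformDl B 1 u (- v) w; rewrite scale1r mul1r bformNl. Qed.

Lemma mx_ext n (A C : 'M[R]_n) : (forall t : 'rV_n, t *m A = t *m C) -> A = C.
Proof. by move=> h; apply/row_matrixP => i; rewrite !rowE h. Qed.

Definition lclosed (vT : lmodType R) (P : vT -> Prop) :=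
  P 0 /\ (forall (a : R) X Y, P X -> P Y -> P (a *: X + Y)).

Lemma lcZ (vT : lmodType R) (P : vT -> Prop) a X : lclosed P -> P X -> P (a *: X).
Proof. by case=> P0 PL PX; rewrite -[_ *: _]addr0; apply: PL. Qed.

Lemma lcD (vT : lmodType R) (P : vT -> Prop) X Y : lclosed P -> P X -> P Y -> P (X + Y).
Proof. by case=> P0 PL PX PY; rewrite -[X]scale1r; apply: PL. Qed.

Lemma lcN (vT : lmodType R) (P : vT -> Prop) X : lclosed P -> P X -> P (- X).
Proof. by move=> cP PX; rewrite -scaleN1r; apply: lcZ. Qed.

Lemma lcB (vT : lmodType R) (P : vT -> Prop) X Y : lclosed P -> P X -> P Y -> P (X - Y).
Proof. by move=> cP PX PY; apply: lcD => //; apply: lcN. Qed.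

Lemma lc_sum (vT : lmodType R) (P : vT -> Prop) I (s : seq I) (F : I -> vT) :
  lclosed P -> (forall i, P (F i)) -> P (\sum_(i <- s) F i).
Proof.
move=> cP PF; elim: s => [|x s IH]; first by rewrite big_nil; case: cP.
by rewrite big_cons; apply: lcD.
Qed.

Lemma rlin_sumR (vT : lmodType R) (P : vT -> Prop) (f : vT -> R) I (s : seq I)
    (c : I -> R) (u : I -> vT) :
  lclosed P -> (forall a X Y, P X -> P Y -> f (a *: X + Y) = a * f X + f Y) ->
  (forall i, P (u i)) ->
  f (\sum_(i <- s) c i *: u i) = \sum_(i <- s) c i * f (u i).
Proof.
move=> cP fl Pu; have f0 : f 0 = 0.
  have := fl 1 0 0 (proj1 cP) (proj1 cP); rewrite scaler0 addr0 mul1r => h.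
  by apply: (addrI (f 0)); rewrite addr0 -h.
elim: s => [|x s IH]; first by rewrite !big_nil.
rewrite !big_cons fl ?IH //; first by apply: lc_sum => // i; apply: lcZ.
Qed.

Lemma rlin_sumV (vT : lmodType R) (P : vT -> Prop) (wT : lmodType R) (f : vT -> wT)
    I (s : seq I) (c : I -> R) (u : I -> vT) :
  lclosed P -> (forall a X Y, P X -> P Y -> f (a *: X + Y) = a *: f X + f Y) ->
  (forall i, P (u i)) ->
  f (\sum_(i <- s) c i *: u i) = \sum_(i <- s) c i *: f (u i).
Proof.
move=> cP fl Pu; have f0 : f 0 = 0.
  have := fl 1 0 0 (proj1 cP) (proj1 cP); rewrite scaler0 addr0 scale1r => h.
  by apply: (addrI (f 0)); rewrite addr0 -h.
elim: s => [|x s IH]; first by rewrite !big_nil.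
rewrite !big_cons fl ?IH //; first by apply: lc_sum => // i; apply: lcZ.
Qed.

Lemma vs_lclosed (vT : vectType R) (U : {vspace vT}) : lclosed (fun x => x \in U).
Proof. by split; [exact: mem0v | move=> a X Y hX hY; rewrite memvD // memvZ]. Qed.


Lemma exists_vspace (vT : vectType R) (P : vT -> Prop) :
  lclosed P -> exists U : {vspace vT}, forall X, P X <-> X \in U.
Proof.
move=> cP.
have key : forall k, (exists U : {vspace vT}, forall X, P X <-> X \in U) \/
    (exists s : seq vT, (forall x, x \in s -> P x) /\ (k <= \dim <<s>>)%N).
  elim=> [|k [IH|[s [Ps le_ks]]]]; [right; exists [::]; split => // | by left |].
  case: (classic (forall X, P X -> X \in <<s>>%VS)) => [hs|].
    left; exists <<s>>%VS => X; split; first exact: hs.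
    move=> hX; rewrite (@coord_span _ _ _ (in_tuple s) X hX).
    apply: lc_sum => // i; apply: lcZ => //; apply: Ps.
    by apply: mem_nth; exact: ltn_ord.
  move=> hn; have [X hX] := not_all_ex_not _ _ hn.
  have [PX nX] := imply_to_and _ _ hX.
  right; exists (X :: s); split.
    by move=> x; rewrite inE => /orP [/eqP ->|]; [|apply: Ps].
  have sub : (<<s>> <= <<X :: s>>)%VS by rewrite span_cons addvSr.
  have lt : (\dim <<s>> < \dim <<X :: s>>)%N.
    rewrite (ltn_leqif (dimv_leqif_eq sub)); apply/negP => /eqP E.
    by apply: nX; rewrite E memv_span // inE eqxx.
  exact: leq_ltn_trans le_ks lt.
case: (key (\dim (fullv : {vspace vT})).+1) => // [[s [_ le]]].
by move: (dimvS (subvf <<s>>)); rewrite leqNgt le.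
Qed.

Lemma inj_dim (vT : vectType R) (U : {vspace vT}) r (f : vT -> 'rV[R]_r) :
  (forall a u v, u \in U -> v \in U -> f (a *: u + v) = a *: f u + f v) ->
  (forall u, u \in U -> f u = 0 -> u = 0) ->
  (\dim U <= r)%N /\ (\dim U = r -> forall w, exists2 u, u \in U & f u = w).
Proof.
move=> fl finj.
set b := vbasis U.
have bU : forall i, b`_i \in U.
  move=> i; case: (ltnP i (size b)) => hi; first by apply: vbasis_mem; rewrite mem_nth.
  by rewrite nth_default // mem0v.
have fsum : forall c : 'I_(\dim U) -> R,
    f (\sum_(i < \dim U) c i *: b`_i) = \sum_(i < \dim U) c i *: f b`_i.
  move=> c; apply: (@rlin_sumV _ (fun x => x \in U)) => //; exact: vs_lclosed.
set T := map_tuple f b.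
have TE : forall i : 'I_(\dim U), T`_i = f b`_i.
  by move=> i; rewrite /T /= (nth_map 0) // size_tuple.
have freeT : free T.
  apply/freeP => k hk i.
  have /freeP hb := basis_free (vbasisP U); apply: hb.
  apply: finj; first by apply: memv_suml => j _; rewrite memvZ.
  by rewrite fsum -[X in _ = X]hk; apply: eq_bigr => j _; rewrite TE.
have dT : \dim <<T>> = \dim U by move: freeT; rewrite /free size_tuple => /eqP.
have dfull : \dim (fullv : {vspace 'rV[R]_r}) = r.
  by rewrite dimvf dim_matrix mul1r.
split; first by rewrite -dT -[X in (_ <= X)%N]dfull dimvS // subvf.
move=> dUr w.
have eT : <<T>>%VS = fullv.
  by apply/eqP; rewrite eqEdim subvf dfull dT dUr /= leqnn.
have : w \in <<T>>%VS by rewrite eT memvf.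
move=> /coord_span ->; exists (\sum_(i < \dim U) coord T i w *: b`_i).
  by apply: memv_suml => j _; rewrite memvZ.
by rewrite fsum; apply: eq_bigr => j _; rewrite TE.
Qed.


Lemma vbasis_nth (vT : vectType R) (U : {vspace vT}) i : (vbasis U)`_i \in U.
Proof.
case: (ltnP i (size (vbasis U))) => hi; first by apply: vbasis_mem; rewrite mem_nth.
by rewrite nth_default // mem0v.
Qed.

Definition Dm (p : lieRep R) (x y : 'rV[R]_(lrdim p)) : 'M[R]_(lrdim p) :=
  epsilon (inhabits 0) (fun A => lrg p A /\
     forall Y, lrg p Y -> lrh p A Y = bform (lrform p) (x *m Y) y).

Definition Fm (p : lieRep R) : leib3 R :=
  @Leib3 R (lrdim p) (lrform p) (fun x y z => z *m Dm x y).

Section Rep.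
Variable p : lieRep R.
Hypothesis mp : is_metric_lie_rep p.
Local Notation n := (lrdim p).
Local Notation g := (lrg p).
Local Notation h := (lrh p).
Local Notation B := (lrform p).

Lemma rep_form : nondeg_sym_form B. Proof. by case: mp. Qed.
Lemma gcl : lclosed g. Proof. by case: mp => _ [g0 [gl _]]. Qed.
Lemma gso X u v : g X -> bform B (u *m X) v + bform B u (v *m X) = 0.
Proof. by move=> gX; case: mp => _ [_ [_ [hs _]]]; apply: hs. Qed.
Lemma gbr X Y : g X -> g Y -> g (lie_br X Y).
Proof. by move=> gX gY; case: mp => _ [_ [_ [_ [hb _]]]]; apply: hb. Qed.
Lemma hDl a X Y Z : g X -> g Y -> g Z -> h (a *: X + Y) Z = a * h X Z + h Y Z.
Proof. by move=> *; case: mp => _ [_ [_ [_ [_ [hl _]]]]]; apply: hl. Qed.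
Lemma hsym X Y : g X -> g Y -> h X Y = h Y X.
Proof. by move=> *; case: mp => _ [_ [_ [_ [_ [_ [hs _]]]]]]; apply: hs. Qed.
Lemma hnd X : g X -> (forall Y, g Y -> h X Y = 0) -> X = 0.
Proof. by move=> *; case: mp => _ [_ [_ [_ [_ [_ [_ [hn _]]]]]]]; apply: hn. Qed.
Lemma hinv X Y Z : g X -> g Y -> g Z -> h (lie_br X Y) Z + h Y (lie_br X Z) = 0.
Proof. by move=> *; case: mp => _ [_ [_ [_ [_ [_ [_ [_ hi]]]]]]]; apply: hi. Qed.
Lemma hDr a X Y Z : g X -> g Y -> g Z -> h Z (a *: X + Y) = a * h Z X + h Z Y.
Proof.
move=> gX gY gZ; rewrite hsym ?hDl ?(hsym gX) ?(hsym gY) //.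
by apply: (proj2 gcl).
Qed.

Lemma riesz (phi : 'M[R]_n -> R) :
  (forall a X Y, g X -> g Y -> phi (a *: X + Y) = a * phi X + phi Y) ->
  exists A, g A /\ forall Y, g Y -> h A Y = phi Y.
Proof.
move=> phil; have [U hU] := exists_vspace gcl.
set b := vbasis U.
have gb : forall i, g b`_i by move=> i; apply/hU; apply: vbasis_nth.
pose f Z := \row_(j < \dim U) h Z b`_j.
have hexp : forall k : 'M[R]_n -> R,
    (forall a X1 X2, g X1 -> g X2 -> k (a *: X1 + X2) = a * k X1 + k X2) ->
    forall Y, Y \in U -> k Y = \sum_(i < \dim U) coord (vbasis U) i Y * k (vbasis U)`_i.
  move=> k kl Y YU; rewrite {1}(coord_vbasis YU).
  exact: (@rlin_sumR _ g k _ _ _ (fun i : 'I_(\dim U) => (vbasis U)`_i) gcl kl (fun i => gb i)).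
have hZl : forall Z, g Z -> forall a X1 X2, g X1 -> g X2 ->
    h Z (a *: X1 + X2) = a * h Z X1 + h Z X2.
  by move=> Z gZ a X1 X2 g1 g2; rewrite hDr.
have fl : forall a u v, u \in U -> v \in U -> f (a *: u + v) = a *: f u + f v.
  by move=> a u v /hU gu /hU gv; apply/rowP => j; rewrite !mxE hDl.
have finj : forall u, u \in U -> f u = 0 -> u = 0.
  move=> Z /hU gZ /rowP fZ; apply: hnd => // Y /hU YU.
  rewrite (hexp _ (hZl Z gZ) Y YU).
  by apply: big1 => i _; have := fZ i; rewrite !mxE => ->; rewrite mulr0.
have [_ surj] := @inj_dim _ U (\dim U) f fl finj.
have [A /hU gA fA] := surj erefl (\row_(j < \dim U) phi b`_j).
exists A; split => // Y /hU YU.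
rewrite (hexp _ (hZl A gA) Y YU) (hexp _ phil Y YU); apply: eq_bigr => i _.
by move/rowP: fA => /(_ i); rewrite !mxE => ->.
Qed.

Lemma huniq A A' : g A -> g A' -> (forall Y, g Y -> h A Y = h A' Y) -> A = A'.
Proof.
move=> gA gA' hA; apply/eqP; rewrite -subr_eq0; apply/eqP.
apply: hnd; first by apply: lcB => //; apply: gcl.
move=> Y gY; have := hDl (-1) gA' gA gY.
by rewrite scaleN1r addrC hA // mulN1r addNr.
Qed.

Local Notation D := (@Dm p).

Lemma hD X Y Z : g X -> g Y -> g Z -> h (X + Y) Z = h X Z + h Y Z.
Proof. by move=> gX gY gZ; have := @hDl 1 X Y Z gX gY gZ; rewrite scale1r mul1r. Qed.
Lemma hN X Z : g X -> g Z -> h (- X) Z = - h X Z.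
Proof.
move=> gX gZ; have g0 : g 0 by case: gcl.
have h0 : h 0 Z = 0 by have := hD g0 g0 gZ; rewrite addr0 => e; apply: (addrI (h 0 Z)); rewrite addr0 -e.
by have := hDl (-1) gX g0 gZ; rewrite addr0 scaleN1r mulN1r h0 addr0.
Qed.

Lemma Dm_spec x y : g (D x y) /\ forall Y, g Y -> h (D x y) Y = bform B (x *m Y) y.
Proof.
rewrite /Dm; apply: (@epsilon_spec _ (inhabits 0) (fun A => g A /\ forall Y, g Y -> h A Y = bform B (x *m Y) y)).
apply: riesz => a X Y gX gY.
by rewrite mulmxDr -scalemxAr bformDl.
Qed.

Lemma gD x y : g (D x y). Proof. by case: (Dm_spec x y). Qed.
Lemma hDm x y Y : g Y -> h (D x y) Y = bform B (x *m Y) y.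
Proof. by case: (Dm_spec x y) => _; apply. Qed.

Lemma Dm_linl a x x' y : D (a *: x + x') y = a *: D x y + D x' y.
Proof.
apply: huniq; [exact: gD | by apply: (proj2 gcl); apply: gD |].
move=> Y gY; rewrite (hDl a (gD x y) (gD x' y) gY) !hDm //.
by rewrite mulmxDl -scalemxAl bformDl.
Qed.

Lemma Dm_linr a x y y' : D x (a *: y + y') = a *: D x y + D x y'.
Proof.
apply: huniq; [exact: gD | by apply: (proj2 gcl); apply: gD |].
move=> Y gY; rewrite (hDl a (gD x y) (gD x y') gY) !hDm //.
by rewrite bformDr.
Qed.

Lemma Dm_der z s X : g X -> D (z *m X) s + D z (s *m X) = lie_br (D z s) X.
Proof.
move=> gX; apply: huniq; [by apply: lcD; [apply: gcl|apply: gD|apply: gD] | by apply: gbr => //; apply: gD |].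
move=> Y gY; rewrite (hD (gD _ _) (gD _ _) gY) !hDm //.
have -> : lie_br (D z s) X = - lie_br X (D z s) by rewrite /lie_br opprB.
rewrite (hN (gbr gX (gD z s)) gY).
have := hinv gX (gD z s) gY => /eqP; rewrite addr_eq0 => /eqP ->.
rewrite opprK hDm; last exact: gbr.
rewrite /lie_br mulmxBr -!mulmxE !mulmxA bformBl.
have := gso (z *m Y) s gX => /eqP; rewrite addr_eq0 => /eqP ->.
by rewrite opprK.
Qed.

Lemma Fm_metric : is_metric3Leibniz (Fm p).
Proof.
have [fsym fnd] := rep_form.
split; first by [].
split.
  split; first by move=> y z a x x'; rewrite /= Dm_linl mulmxDr scalemxAr.
  split; first by move=> x z a y y'; rewrite /= Dm_linr mulmxDr scalemxAr.
  by move=> x y a z z'; rewrite /= mulmxDl scalemxAl.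
split.
  move=> x y z s t /=.
  rewrite -!mulmxA -!mulmxDr; congr (_ *m _).
  rewrite Dm_der; last exact: gD.
  by rewrite /lie_br -!mulmxE subrK.
split; first by move=> x y z s /=; apply: gso; apply: gD.
move=> x y z s /=.
by rewrite -(hDm z s (gD x y)) -(hDm x y (gD z s)) (hsym (gD z s) (gD x y)).
Qed.

Lemma hexpand (U : {vspace 'M[R]_n}) (k : 'M[R]_n -> R) :
  (forall X, X \in U -> g X) ->
  (forall a X1 X2, g X1 -> g X2 -> k (a *: X1 + X2) = a * k X1 + k X2) ->
  forall Y, Y \in U -> k Y = \sum_(i < \dim U) coord (vbasis U) i Y * k (vbasis U)`_i.
Proof.
move=> Ug kl Y YU; rewrite {1}(coord_vbasis YU).
exact: (@rlin_sumR _ g k _ _ _ (fun i : 'I_(\dim U) => (vbasis U)`_i) gcl kl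
  (fun i => Ug _ (vbasis_nth U i))).
Qed.

Lemma Dm0 y : D 0 y = 0.
Proof.
have := Dm_linl 1 0 0 y; rewrite scaler0 addr0 scale1r => e.
by apply: (addrI (D 0 y)); rewrite addr0 -e.
Qed.

Lemma DmZ a x y : D (a *: x) y = a *: D x y.
Proof. by have := Dm_linl a x 0 y; rewrite !addr0 Dm0 addr0. Qed.

Lemma Dspan X : g X -> exists s : seq ('rV[R]_n * 'rV[R]_n),
  X = \sum_(pr <- s) D pr.1 pr.2.
Proof.
have [fsym fnd] := rep_form.
pose P := fun X : 'M[R]_n => exists s : seq ('rV[R]_n * 'rV[R]_n),
  X = \sum_(pr <- s) D pr.1 pr.2.
have cP : lclosed P.
  split; first by exists [::]; rewrite big_nil.
  move=> a X1 X2 [s ->] [t ->].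
  exists ([seq (a *: pr.1, pr.2) | pr <- s] ++ t).
  by rewrite big_cat big_map scaler_sumr; congr (_ + _); apply: eq_bigr => pr _; rewrite DmZ.
have Pg : forall X, P X -> g X.
  by move=> X1 [s ->]; apply: lc_sum; [exact: gcl | move=> i; exact: gD].
have [W hW] := exists_vspace cP.
have [U hU] := exists_vspace gcl.
have WU : (W <= U)%VS by apply/subvP => Z /hW /Pg /hU.
pose f Z := \row_(j < \dim W) h Z (vbasis W)`_j.
have hZl : forall Z, g Z -> forall a X1 X2, g X1 -> g X2 ->
    h Z (a *: X1 + X2) = a * h Z X1 + h Z X2.
  by move=> Z gZ a X1 X2 g1 g2; rewrite hDr.
have fl : forall a u v, u \in U -> v \in U -> f (a *: u + v) = a *: f u + f v.
  by move=> a u v /hU gu /hU gv; apply/rowP => j; rewrite !mxE hDl //; apply: Pg; apply/hW; apply: vbasis_nth.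
have finj : forall u, u \in U -> f u = 0 -> u = 0.
  move=> Z /hU gZ /rowP fZ.
  have hW0 : forall Y, Y \in W -> h Z Y = 0.
    move=> Y YW; rewrite (hexpand (fun X1 XW => Pg X1 (proj2 (hW X1) XW)) (hZl Z gZ) YW).
    by apply: big1 => i _; have := fZ i; rewrite !mxE => ->; rewrite mulr0.
  apply: mx_ext => t; rewrite mulmx0; apply: fnd => v.
  have DW : D t v \in W by apply/hW; exists [:: (t, v)]; rewrite big_seq1.
  by rewrite -hDm // (hsym (gD t v) gZ) hW0.
have [le _] := @inj_dim _ U (\dim W) f fl finj.
have eWU : W = U by apply/eqP; rewrite eqEdim WU.
by move=> /hU; rewrite -eWU => /hW.
Qed.

Lemma hsum I (r : seq I) (F : I -> 'M[R]_n) Z :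
  (forall i, g (F i)) -> g Z -> h (\sum_(i <- r) F i) Z = \sum_(i <- r) h (F i) Z.
Proof.
move=> gF gZ; have g0 : g 0 by case: gcl.
elim: r => [|x r IH].
  rewrite !big_nil; have := hD g0 g0 gZ; rewrite addr0 => e.
  by apply: (addrI (h 0 Z)); rewrite addr0 -e.
rewrite !big_cons hD ?IH //; apply: lc_sum => //; exact: gcl.
Qed.

End Rep.

Lemma conj_uniq n m (phi : 'rV[R]_n -> 'rV[R]_m) X Y Y' :
  bijective phi -> conj_by phi X Y -> conj_by phi X Y' -> Y = Y'.
Proof.
move=> [psi k1 k2] c1 c2; apply: mx_ext => t.
by rewrite -(k2 t) -c1 c2.
Qed.

Lemma iso_equiv p q : is_metric_lie_rep p -> is_metric_lie_rep q ->
  (lieRep_iso p q <-> leib3_iso (Fm p) (Fm q)).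
Proof.
move=> mp mq; split.
  move=> [phi [phil [phib [phiiso [c1 [c2 c3]]]]]].
  exists phi; split => //; split => //; split => // u v w /=.
  have [Y [gY cY]] := c1 _ (gD mp u v).
  rewrite cY; congr (_ *m _); apply: (huniq mq) => //; first exact: gD.
  move=> W gW; have [X [gX cX]] := c2 W gW.
  rewrite (c3 _ _ _ _ (gD mp u v) gX gY gW cY cX) (hDm mp) // (hDm mq) //.
  by rewrite -cX phiiso.
move=> [phi [phil [phib [phibr phiiso]]]] /=.
have [psi k1 k2] := phib.
have conjsum : forall s : seq ('rV[R]_(lrdim p) * 'rV[R]_(lrdim p)),
    conj_by phi (\sum_(pr <- s) Dm pr.1 pr.2)
                (\sum_(pr <- s) Dm (phi pr.1) (phi pr.2)).
  move=> s v; rewrite !mulmx_sumr (lin_sum _ _ phil); apply: eq_bigr => pr _.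
  by rewrite -phibr.
exists phi; split => //; split => //; split => //; split.
  move=> X /(Dspan mp) [s ->]; exists (\sum_(pr <- s) Dm (phi pr.1) (phi pr.2)).
  split => //; apply: lc_sum; [exact: gcl mq | move=> i; exact: gD].
split.
  move=> Y /(Dspan mq) [t ->].
  exists (\sum_(pr <- [seq (psi pr.1, psi pr.2) | pr <- t]) Dm pr.1 pr.2).
  split; first by apply: lc_sum; [exact: gcl mp | move=> i; exact: gD].
  have := conjsum [seq (psi pr.1, psi pr.2) | pr <- t].
  rewrite !big_map /=; under [in X in conj_by _ _ X -> _]eq_bigr do rewrite !k2.
  by [].
move=> X1 X2 Y1 Y2 g1 g2 g1' g2' cj1 cj2.
have [s eX1] := Dspan mp g1.
have eY1 := conj_uniq phib cj1 (eq_ind_r (fun X => conj_by phi X _) (conjsum s) eX1).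
rewrite eY1 eX1 (hsum mq) //; last by move=> i; exact: gD.
rewrite (hsum mp) //; last by move=> i; exact: gD.
apply: eq_bigr => pr _; rewrite (hDm mq) // (hDm mp) //.
by rewrite -cj2 phiiso.
Qed.


Definition adm (L : leib3 R) (x y : 'rV[R]_(l3dim L)) : 'M[R]_(l3dim L) :=
  \matrix_(i, j) (l3br L x y (delta_mx 0 i)) 0 j.
Definition gL (L : leib3 R) (X : 'M[R]_(l3dim L)) :=
  exists s : seq ('rV[R]_(l3dim L) * 'rV[R]_(l3dim L)), X = \sum_(pr <- s) adm pr.1 pr.2.
Definition hL (L : leib3 R) (X Y : 'M[R]_(l3dim L)) : R :=
  \sum_(pr <- epsilon (inhabits [::])
        (fun s : seq ('rV[R]_(l3dim L) * 'rV[R]_(l3dim L)) => X = \sum_(pr <- s) adm pr.1 pr.2))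
    bform (l3form L) (pr.1 *m Y) pr.2.
Definition Gm (L : leib3 R) : lieRep R := @LieRep R (l3dim L) (l3form L) (@gL L) (@hL L).

Section Leib.
Variable L : leib3 R.
Hypothesis mL : is_metric3Leibniz L.
Local Notation n := (l3dim L).
Local Notation br := (l3br L).
Local Notation B := (l3form L).
Local Notation A := (@adm L).

Lemma Lform : nondeg_sym_form B. Proof. by case: mL. Qed.
Lemma Ltri : trilinear br. Proof. by case: mL => _ []. Qed.
Lemma LFI x y z s t :
  br x y (br z s t) = br (br x y z) s t + br z (br x y s) t + br z s (br x y t).
Proof. by case: mL => _ [_ [hf _]]; apply: hf. Qed.
Lemma Lunit x y z s : bform B (br x y z) s + bform B z (br x y s) = 0.
Proof. by case: mL => _ [_ [_ [hu _]]]; apply: hu. Qed.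
Lemma Lsym x y z s : bform B (br x y z) s = bform B (br z s x) y.
Proof. by case: mL => _ [_ [_ [_ hs]]]; apply: hs. Qed.

Lemma adm_mul z x y : z *m A x y = br x y z.
Proof.
have [_ [_ tz]] := Ltri.
rewrite [in RHS](row_sum_delta z) (lin_sum _ _ (tz x y)); apply/rowP => j.
rewrite !mxE summxE; apply: eq_bigr => i _.
by rewrite (linZ _ _ (tz x y)) !mxE.
Qed.

Lemma admL a x x' y : A (a *: x + x') y = a *: A x y + A x' y.
Proof.
have [tx _] := Ltri.
by apply: mx_ext => t; rewrite mulmxDr -scalemxAr !adm_mul (tx y t).
Qed.

Lemma admR a x y y' : A x (a *: y + y') = a *: A x y + A x y'.
Proof.
have [_ [ty _]] := Ltri.
by apply: mx_ext => t; rewrite mulmxDr -scalemxAr !adm_mul (ty x t).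
Qed.

Lemma adm0 y : A 0 y = 0.
Proof.
have := admL 1 0 0 y; rewrite scaler0 addr0 scale1r => e.
by apply: (addrI (A 0 y)); rewrite addr0 -e.
Qed.
Lemma admZ a x y : A (a *: x) y = a *: A x y.
Proof. by have := admL a x 0 y; rewrite !addr0 adm0 addr0. Qed.
Lemma admD x x' y : A (x + x') y = A x y + A x' y.
Proof. by have := admL 1 x x' y; rewrite !scale1r. Qed.
Lemma admN x y : A (- x) y = - A x y.
Proof. by rewrite -scaleN1r admZ scaleN1r. Qed.
Lemma adm0r x : A x 0 = 0.
Proof.
have := admR 1 x 0 0; rewrite scaler0 addr0 scale1r => e.
by apply: (addrI (A x 0)); rewrite addr0 -e.
Qed.
Lemma admDr x y y' : A x (y + y') = A x y + A x y'.
Proof. by have := admR 1 x y y'; rewrite !scale1r. Qed.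
Lemma adm_suml I (r : seq I) (F : I -> 'rV[R]_n) y :
  A (\sum_(i <- r) F i) y = \sum_(i <- r) A (F i) y.
Proof. by apply: (big_morph (fun x => A x y) (fun u v => admD u v y) (adm0 y)). Qed.
Lemma adm_sumr I (r : seq I) (F : I -> 'rV[R]_n) x :
  A x (\sum_(i <- r) F i) = \sum_(i <- r) A x (F i).
Proof. by apply: (big_morph (fun y => A x y) (fun u v => admDr x u v) (adm0r x)). Qed.

Lemma gLcl : lclosed (@gL L).
Proof.
split; first by exists [::]; rewrite big_nil.
move=> a X1 X2 [s ->] [t ->].
exists ([seq (a *: pr.1, pr.2) | pr <- s] ++ t).
by rewrite big_cat big_map scaler_sumr; congr (_ + _); apply: eq_bigr => pr _; rewrite admZ.
Qed.

Lemma gL1 x y : gL (A x y).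
Proof. by exists [:: (x, y)]; rewrite big_seq1. Qed.

Lemma gLso X u v : gL X -> bform B (u *m X) v + bform B u (v *m X) = 0.
Proof.
move=> [s ->]; rewrite !mulmx_sumr bform_suml bform_sumr -big_split /=.
by apply: big1 => pr _; rewrite !adm_mul Lunit.
Qed.

Lemma swap (s t : seq ('rV[R]_n * 'rV[R]_n)) :
  \sum_(pr <- s) bform B (pr.1 *m \sum_(q <- t) A q.1 q.2) pr.2 =
  \sum_(q <- t) bform B (q.1 *m \sum_(pr <- s) A pr.1 pr.2) q.2.
Proof.
under eq_bigr do rewrite mulmx_sumr bform_suml.
under [RHS]eq_bigr do rewrite mulmx_sumr bform_suml.
rewrite exchange_big /=; apply: eq_bigr => q _; apply: eq_bigr => pr _.
by rewrite !adm_mul Lsym.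
Qed.

Lemma hL_rep X Y (s : seq ('rV[R]_n * 'rV[R]_n)) : X = \sum_(pr <- s) A pr.1 pr.2 -> gL Y ->
  hL X Y = \sum_(pr <- s) bform B (pr.1 *m Y) pr.2.
Proof.
move=> eX [t eY]; rewrite /hL.
set s0 := epsilon _ _.
have e0 : X = \sum_(pr <- s0) A pr.1 pr.2.
  by rewrite /s0; apply: (@epsilon_spec _ (inhabits [::])
    (fun s => X = \sum_(pr <- s) A pr.1 pr.2)); exists s.
by rewrite eY swap -e0 [RHS]swap -eX.
Qed.

Lemma hL_rep2 X Y (t : seq ('rV[R]_n * 'rV[R]_n)) : gL X -> Y = \sum_(pr <- t) A pr.1 pr.2 ->
  hL X Y = \sum_(pr <- t) bform B (pr.1 *m X) pr.2.
Proof.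
move=> [s eX] eY; rewrite (hL_rep eX); last by exists t.
by rewrite eY swap -eX.
Qed.

Lemma adm_der1 z w x y : A (z *m A x y) w + A z (w *m A x y) = lie_br (A z w) (A x y).
Proof.
apply: mx_ext => t; rewrite mulmxDr !adm_mul /lie_br mulmxBr -!mulmxE !mulmxA !adm_mul.
by rewrite LFI addrK.
Qed.

Lemma lie_br_sumr I (r : seq I) (F : I -> 'M[R]_n) X :
  lie_br X (\sum_(i <- r) F i) = \sum_(i <- r) lie_br X (F i).
Proof. by rewrite /lie_br -!mulmxE mulmx_sumr mulmx_suml -sumrB. Qed.

Lemma lie_br_anti (X Y : 'M[R]_n) : lie_br X Y = - lie_br Y X.
Proof. by rewrite /lie_br opprB. Qed.

Lemma adm_der z w X : gL X -> A (z *m X) w + A z (w *m X) = lie_br (A z w) X.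
Proof.
move=> [s ->]; rewrite !mulmx_sumr adm_suml adm_sumr -big_split lie_br_sumr.
by apply: eq_bigr => pr _; exact: adm_der1.
Qed.

Lemma br_rep X (t : seq ('rV[R]_n * 'rV[R]_n)) : gL X ->
  lie_br X (\sum_(pr <- t) A pr.1 pr.2) =
  \sum_(pr <- [seq (- (pr.1 *m X), pr.2) | pr <- t] ++ [seq (- pr.1, pr.2 *m X) | pr <- t])
     A pr.1 pr.2.
Proof.
move=> gX; rewrite big_cat !big_map /= -big_split lie_br_sumr /=.
apply: eq_bigr => pr _; rewrite !admN -opprD adm_der //.
by rewrite lie_br_anti.
Qed.

Lemma Gm_metric : is_metric_lie_rep (Gm L).
Proof.
have [fsym fnd] := Lform.
have [gL0 gLl] := gLcl.
split => //=; split => //; split => //.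
split; first by move=> X gX u v; apply: gLso.
split; first by move=> X Y gX [t ->]; rewrite br_rep //; eexists; reflexivity.
split.
  move=> a X Y Z gX gY [t eZ]; rewrite !(hL_rep2 _ eZ) //; last by apply: gLl.
  rewrite mulr_sumr -big_split; apply: eq_bigr => pr _ /=.
  by rewrite mulmxDr -scalemxAr bformDl.
split.
  by move=> X Y gX [t eY]; rewrite (hL_rep2 gX eY) (hL_rep eY gX).
split.
  move=> X gX hX; apply: mx_ext => z; rewrite mulmx0; apply: fnd => w.
  have e : A z w = \sum_(pr <- [:: (z, w)]) A pr.1 pr.2 by rewrite big_seq1.
  by have := hX _ (gL1 z w); rewrite (hL_rep2 gX e) big_seq1.
move=> X Y Z gX gY [t eZ].
have gXY : gL (lie_br X Y).
  by case: gY => s ->; rewrite br_rep //; eexists; reflexivity.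
rewrite (hL_rep2 gXY eZ) eZ br_rep // (hL_rep2 gY (erefl _)).
rewrite big_cat !big_map /= -!big_split /=; apply: big1 => pr _.
have := gLso (pr.1 *m Y) pr.2 gX => /eqP; rewrite addr_eq0 => /eqP e.
rewrite !mulNmx !bformNl /lie_br mulmxBr -!mulmxE !mulmxA bformBl e.
by ring.
Qed.

End Leib.

Lemma FG_iso L : is_metric3Leibniz L -> leib3_iso (Fm (Gm L)) L.
Proof.
move=> mL; have mG := Gm_metric mL.
have eD : forall x y : 'rV[R]_(l3dim L), @Dm (Gm L) x y = adm x y.
  move=> x y; apply: (huniq mG); [exact: (gD mG) | exact: gL1 |].
  move=> Y gY; rewrite (hDm mG) //.
  have e : adm x y = \sum_(pr <- [:: (x, y)]) adm pr.1 pr.2 by rewrite big_seq1.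
  by have := hL_rep mL e gY; rewrite big_seq1 /= => ->.
exists id; split; first by [].
split; first by exists id.
split; last by [].
by move=> u v w /=; rewrite eD adm_mul.
Qed.

End Helpers.

Theorem mainTheorem5 (R : realType) :
  exists F : lieRep R -> leib3 R,
    (forall p, is_metric_lie_rep p -> is_metric3Leibniz (F p)) /\
    (forall p q, is_metric_lie_rep p -> is_metric_lie_rep q ->
       (lieRep_iso p q <-> leib3_iso (F p) (F q))) /\
    (forall L, is_metric3Leibniz L ->
       exists p, is_metric_lie_rep p /\ leib3_iso (F p) L).
Proof.
exists (@Fm R); split; first by move=> p mp; exact: Fm_metric.
split; first by move=> p q mp mq; exact: iso_equiv.
move=> L mL; exists (Gm L); split; first exact: Gm_metric.
exact: FG_iso.
Qed.
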